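(* Let $\ell,k_1,k$ be positive integers. Consider RSA-PFDH with message space $\{0,1\}^\ell$, randomness length $k_1$ and hash function $h:\{0,1\}^{\ell+k_1}\to\{0,1\}^k$, in the chosen prefix second preimage tractable random oracle model $\mathrm{CP\text{-}SPT\text{-}ROM}_{(\ell,k_1,k)}$. There exists a PPT adversary $\mathcal{A}$ that, by making queries to the signing oracle and to $\mathcal{CP\text{-}SPO}^h$, breaks RSA-PFDH (outputs a valid EUF-CMA forgery) with probability at least $1-e^{(1-2^{\ell})/2^k}$. In particular, if $\ell\ge k\ge 2$, $\mathcal{A}$ outputs a valid forgery with probability at least $1-e^{-1/2}$.
   Context: Model $\mathrm{CP\text{-}SPT\text{-}ROM}_{(\ell,k_1,k)}$: let $M=\{0,1\}^{\ell}$, $R=\{0,1\}^{k_1}$, $X=M\times R$ (elements written as strings $m\|r$), $Y=\{0,1\}^k$, and $h:X\to Y$ a uniformly random function with table $\mathbb{T}_h$. All parties may query $\mathcal{RO}^h(x)$, returning $h(x)$, and the chosen prefix second preimage oracle $\mathcal{CP\text{-}SPO}^h(x,r')$: given $x$ with $|x|=\ell+k_1$ and $r'$ with $|r'|=k_1$, let $y=h(x)$; if there is an entry $(m'\|r',y)\in\mathbb{T}_h$ with $m'\|r'\ne x$, it returns such an $m'\|r'$ uniformly at random; otherwise it returns $\perp$. RSA-PFDH: $\mathsf{RSAGen}(1^k)$ chooses distinct random $k/2$-bit primes $p,q$, $N=pq$, $\phi=(p-1)(q-1)$, random $e\in\mathbb{Z}_\phi$ and $d$ with $ed\equiv1\pmod\phi$;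 $vk=(N,e)$, $sk=(N,d)$. $\mathsf{Sign}(sk,m)$: pick $r\in\{0,1\}^{k_1}$ uniformly, output $\sigma=(r,h(m\|r)^d\bmod N)$. $\mathsf{Verify}(vk,m,(r,x))=1$ iff $h(m\|r)=x^e\bmod N$. EUF-CMA game: the adversary receives $vk$, may query the signing oracle and the model's oracles, and outputs $(m^*,\sigma^* )$; it breaks the scheme if $\mathsf{Verify}(vk,m^*,\sigma^* )=1$ and $m^*$ was never queried to the signing oracle. *)

(* Defs.v *)
From HB Require Import structures.
From mathcomp Require Import all_boot all_order all_algebra.
From mathcomp Require Import reals sequences exp.
Set Implicit Arguments. Unset Strict Implicit. Unset Printing Implicit Defensive.
Import Order.TTheory GRing.Theory Num.Theory.

Definition bits (n : nat) := n.-tuple bool.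

(* little-endian binary value of a bit string (a fixed injection into [0,2^n)) *)
Definition bits2nat (n : nat) (b : bits n) : nat :=
  \sum_(i < n) (tnth b i : nat) * 2 ^ i.

(* The random oracle table: h : X -> Y with X = M x R (x = m||r). *)
Definition hfun (l k1 k : nat) := {ffun bits l * bits k1 -> bits k}.

Definition kbit_prime (b p : nat) : bool :=
  prime p && (2 ^ b.-1 <= p < 2 ^ b).

Definition rsa_key (k p q e d : nat) : Prop :=
  let phi := (p.-1 * q.-1)%N in
  [/\ kbit_prime k./2 p, kbit_prime k./2 q, p != q,
      (e < phi) && (d < phi) & e * d = 1 %[mod phi]].

Definition pfdh_verify l k1 k (h : hfun l k1 k) (N e : nat)
    (m : bits l) (r : bits k1) (x : nat) : bool :=
  bits2nat (h (m, r)) %% N == x ^ e %% N.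

Definition pfdh_sigval l k1 k (h : hfun l k1 k) (N d : nat)
    (m : bits l) (r : bits k1) : nat :=
  bits2nat (h (m, r)) ^ d %% N.

(* Adversaries: loop-free oracle programs over a register file.       *)
(* Every instruction is a polynomial-time primitive on values of      *)
(* polynomial size; programs of size bounded independently of the     *)
(* parameters are therefore PPT.             *)

Inductive val (l k1 k : nat) : Type :=
| VMsg of bits l
| VRnd of bits k1
| VInp of bits l * bits k1
| VHash of bits k
| VNum of nat
| VBool of bool.
Arguments VMsg {l k1 k}. Arguments VRnd {l k1 k}. Arguments VInp {l k1 k}.
Arguments VHash {l k1 k}. Arguments VNum {l k1 k}. Arguments VBool {l k1 k}.

Definition val_eq l k1 k (u v : option (val l k1 k)) : option bool :=
  match u, v with
  | Some (VMsg a), Some (VMsg b) => Some (a == b)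
  | Some (VRnd a), Some (VRnd b) => Some (a == b)
  | Some (VInp a), Some (VInp b) => Some (a == b)
  | Some (VHash a), Some (VHash b) => Some (a == b)
  | Some (VNum a), Some (VNum b) => Some (a == b)
  | Some (VBool a), Some (VBool b) => Some (a == b)
  | _, _ => None
  end.

(* Registers are numbered in order of creation; the initial registers
   are 0 = N and 1 = e (the verification key). *)
Inductive prog (l k1 k : nat) : Type :=
| PConst of val l k1 k & prog l k1 k
| PEq of nat & nat & prog l k1 k
| PPair of nat & nat & prog l k1 k
| PFst of nat & prog l k1 k
| PSnd of nat & prog l k1 k
| PCoin of prog l k1 k
| PIf of nat & prog l k1 k & prog l k1 k
| PRO of nat & prog l k1 k
| PSign of nat & prog l k1 k                  (* two new registers := r, sigma *)
| PSPO of nat & nat & prog l k1 k & prog l k1 k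
    (* CP-SPO^h(ri, rj): on an answer m'||r' store it in a new register and
       continue with the first program; on bottom continue with the second *)
| POut of nat & nat & nat.                    (* output (m_out, (r_out, x_out)) *)
Arguments POut {l k1 k}.

Fixpoint psize l k1 k (P : prog l k1 k) : nat :=
  match P with
  | PConst _ P' | PEq _ _ P' | PPair _ _ P' | PFst _ P' | PSnd _ P'
  | PCoin P' | PRO _ P' | PSign _ P' => (psize P').+1
  | PIf _ P1 P2 | PSPO _ _ P1 P2 => (psize P1 + psize P2).+1
  | POut _ _ _ => 1
  end.

Local Open Scope ring_scope.

Definition avg (R : realType) (T : finType) (f : T -> R) : R :=
  (\sum_(t : T) f t) / (#|T|%:R).

(* Probability that the adversary wins the EUF-CMA game, for a fixed
   hash table h, key (N,e,d), list of signed messages [log] and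
   register file [env]; averaging over signing randomness, the
   uniform choices of CP-SPO and the adversary's coins. *)
Fixpoint win (R : realType) l k1 k (N e d : nat) (h : hfun l k1 k)
    (log : seq (bits l)) (env : seq (val l k1 k)) (P : prog l k1 k)
    {struct P} : R :=
  match P with
  | PConst v P' => win R N e d h log (rcons env v) P'
  | PEq i j P' =>
      match val_eq (onth env i) (onth env j) with
      | Some b => win R N e d h log (rcons env (VBool b)) P'
      | None => 0
      end
  | PPair i j P' =>
      match onth env i, onth env j with
      | Some (VMsg m), Some (VRnd r) =>
          win R N e d h log (rcons env (VInp (m, r))) P'
      | _, _ => 0
      end
  | PFst i P' =>
      match onth env i with
      | Some (VInp x) => win R N e d h log (rcons env (VMsg x.1)) P'
      | _ => 0
      end
  | PSnd i P' =>
      match onth env i with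
      | Some (VInp x) => win R N e d h log (rcons env (VRnd x.2)) P'
      | _ => 0
      end
  | PCoin P' =>
      (win R N e d h log (rcons env (VBool true)) P'
       + win R N e d h log (rcons env (VBool false)) P') / 2
  | PIf i P1 P2 =>
      match onth env i with
      | Some (VBool b) =>
          if b then win R N e d h log env P1 else win R N e d h log env P2
      | _ => 0
      end
  | PRO i P' =>
      match onth env i with
      | Some (VInp x) => win R N e d h log (rcons env (VHash (h x))) P'
      | _ => 0
      end
  | PSign i P' =>
      match onth env i with
      | Some (VMsg m) =>
          avg (fun r : bits k1 =>
            win R N e d h (m :: log)
              (rcons (rcons env (VRnd r)) (VNum (pfdh_sigval h N d m r))) P')
      | _ => 0
      end
  | PSPO i j P1 P2 =>
      match onth env i, onth env j with
      | Some (VInp x), Some (VRnd r') =>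
          let cands := [seq m' <- enum {: bits l} |
                          ((m', r') != x) && (h (m', r') == h x)] in
          if cands is [::] then win R N e d h log env P2
          else (\sum_(m' <- cands)
                  win R N e d h log (rcons env (VInp (m', r'))) P1)
               / (size cands)%:R
      | _, _ => 0
      end
  | POut i j t =>
      match onth env i, onth env j, onth env t with
      | Some (VMsg m), Some (VRnd r), Some (VNum x) =>
          if (m \notin log) && pfdh_verify h N e m r x then 1 else 0
      | _, _, _ => 0
      end
  end.

Definition forge_prob (R : realType) l k1 k (A : prog l k1 k)
    (p q e d : nat) : R :=
  let N := (p * q)%N in
  avg (fun h : hfun l k1 k => win R N e d h [::] [:: VNum N; VNum e] A).

(* Main.v *)
Require Import Defs.
From HB Require Import structures.
From mathcomp Require Import all_boot all_order all_algebra.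
From mathcomp Require Import reals sequences exp zify lra.
Import Order.TTheory GRing.Theory Num.Theory.
Lemma fermat_iter p y t : prime p -> y ^ (1 + t * p.-1) = y %[mod p].
Proof.
move=> pp; have p1 := prime_gt1 pp.
elim: t => [|t IH]; first by rewrite mul0n addn0 expn1.
have -> : (1 + t.+1 * p.-1 = t * p.-1 + p)%N by rewrite mulSn; lia.
by rewrite expnD -modnMmr fermat_little // modnMmr -{2}(expn1 y) -expnD addnC.
Qed.

Lemma rsa_ok k p q e d y : rsa_key k p q e d -> (y ^ d %% (p * q)) ^ e %% (p * q) = y %% (p * q).
Proof.
case=> /andP[pp _] /andP[pq _] npq /andP[_ _] hed.
have p1 := prime_gt1 pp; have q1 := prime_gt1 pq.
have phi2 : (2 <= p.-1 * q.-1)%N.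
  move/eqP: npq => npq; nia.
have [s Hs] : exists s, (e * d = 1 + s * (p.-1 * q.-1))%N.
  exists (e * d %/ (p.-1 * q.-1))%N.
  rewrite {1}(divn_eq (e * d) (p.-1 * q.-1)) hed modn_small //; lia.
rewrite modnXm -expnM mulnC Hs.
apply/eqP; rewrite chinese_remainder; last first.
  by rewrite prime_coprime // dvdn_prime2 //.
apply/andP; split; apply/eqP.
  by rewrite mulnA mulnAC fermat_iter.
by rewrite mulnA fermat_iter.
Qed.

Local Open Scope ring_scope.

Lemma foldr_prod (T : Type) (f : T -> nat) s : foldr muln 1%N [seq f x | x <- s] = (\prod_(x <- s) f x)%N.
Proof. by elim: s => [|x s IH]; rewrite ?big_nil ?big_cons //= IH. Qed.

Section Count.
Variables (A B Y : finType) (x0 : A * B) (y : Y).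

Definition Fy (x : A * B) : pred Y :=
  if x == x0 then pred1 y else if x.2 == x0.2 then predC1 y else predT.

Lemma card_Fy :
  #|[pred h : {ffun A * B -> Y} | (h x0 == y) &&
      [forall a, (a != x0.1) ==> (h (a, x0.2) != y)]]| = (\prod_x #|Fy x|)%N.
Proof.
transitivity #|(family Fy : simpl_pred {ffun A * B -> Y})|; last first.
  rewrite card_family /image_mem foldr_prod; rewrite big_enum /=. by [].
apply: eq_card => h /=.
rewrite inE; apply/andP/familyP => [[/eqP hx0 /forallP H] x | H].
  rewrite /Fy; case: eqP => [->|nx]; first by rewrite inE hx0.
  case: eqP => [e2|]; last by [].
  have := H x.1; rewrite inE; case: x nx e2 => a b /= nx e2; rewrite -e2.
  move/implyP; apply; apply/eqP => ea; apply: nx; by rewrite ea e2 -surjective_pairing.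
split; first by have := H x0; rewrite /Fy eqxx.
apply/forallP => a; apply/implyP => na.
have := H (a, x0.2); rewrite /Fy /= eqxx.
rewrite (_ : (a, x0.2) == x0 = false) //.
by apply/negbTE; apply: contra na => /eqP <-.
Qed.
End Count.
Arguments Fy {A B Y}.

Section Prod.
Variables (R : realType) (A B Y : finType) (x0 : A * B) (y : Y).
Let Q : R := #|Y|%:R.
Hypothesis Qpos : (0 < #|Y|)%N.

Lemma card_row : #|[pred x : A * B | (x != x0) && (x.2 == x0.2)]| = #|A|.-1.
Proof.
have H1 : #|[pred x : A * B | x.2 == x0.2]| = #|A|.
  rewrite -[RHS]muln1 -(card1 x0.2) -cardX; apply: eq_card => -[a b] /=.
  by rewrite !inE.
rewrite -H1 [in RHS](cardD1 x0) !inE eqxx /= add0n.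
apply: eq_card => x; by rewrite !inE andbC.
Qed.

Lemma prod_Fy :
  (\prod_x (#|Fy x0 y x|)%:R : R) = Q ^+ #|{: A * B}| * (Q^-1 * (1 - Q^-1) ^+ #|A|.-1).
Proof.
have Q0 : Q != 0 by rewrite pnatr_eq0 -lt0n.
pose g (x : A * B) : R := if x == x0 then Q^-1 else if x.2 == x0.2 then 1 - Q^-1 else 1.
rewrite (eq_bigr (fun x => Q * g x)); last first.
  move=> x _; rewrite /g /Fy; case: eqP => _.
    by rewrite card1 mulfV.
  case: eqP => _; last by rewrite mulr1.
  by rewrite cardC1 mulrBr mulr1 mulfV // /Q -[in RHS](prednK Qpos) -natr1 addrK.
rewrite prodrMl; congr (_ * _).
rewrite (bigD1 x0) //= {1}/g eqxx; congr (_ * _).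
rewrite (eq_bigr (fun x => if x.2 == x0.2 then 1 - Q^-1 else 1)); last first.
  by move=> x /negbTE nx; rewrite /g nx.
rewrite -big_mkcondr /= -card_row -prodr_const; apply: eq_bigl => x.
by rewrite !inE.
Qed.
End Prod.

Lemma sum_card (R : realType) (T : finType) (P : pred T) :
  \sum_(x : T) ((P x)%:R : R) = #|P|%:R.
Proof.
rewrite -sum1_card natr_sum [RHS]big_mkcond /=; apply: eq_bigr => x _.
by rewrite unfold_in; case: (P x).
Qed.

Lemma nocoll_sum (R : realType) (A B Y : finType) (x0 : A * B) :
  (0 < #|Y|)%N ->
  \sum_(h : {ffun A * B -> Y})
     ([forall a, (a != x0.1) ==> (h (a, x0.2) != h x0)])%:R
  = (#|Y|%:R : R) ^+ #|{: A * B}| * (1 - (#|Y|%:R)^-1) ^+ #|A|.-1.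
Proof.
move=> Qpos.
have Q0 : (#|Y|%:R : R) != 0 by rewrite pnatr_eq0 -lt0n.
transitivity (\sum_(h : {ffun A * B -> Y}) \sum_(y : Y)
   (((h x0 == y) && [forall a, (a != x0.1) ==> (h (a, x0.2) != y)])%:R : R)).
  apply: eq_bigr => h _; rewrite (bigD1 (h x0)) //= eqxx /= big1 ?addr0 //.
  by move=> y /negbTE; rewrite eq_sym => ->.
rewrite exchange_big /=.
rewrite (eq_bigr (fun y => (#|Y|%:R : R) ^+ #|{: A * B}| * ((#|Y|%:R)^-1 * (1 - (#|Y|%:R)^-1) ^+ #|A|.-1))); last first.
  move=> y _; rewrite (@sum_card R _ (fun h : {ffun A * B -> Y} => (h x0 == y) && [forall a, (a != x0.1) ==> (h (a, x0.2) != y)])).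
  by rewrite card_Fy natr_prod prod_Fy.
rewrite sumr_const.
set C := _ * _.
have -> : C *+ #|@predT Y| = C * #|Y|%:R by rewrite mulr_natr.
rewrite /C.
by rewrite -mulrA [_ * #|Y|%:R]mulrAC mulVf // mul1r.
Qed.

Definition m0 l : bits l := nseq_tuple l false.
Definition Aprog l k1 k : prog l k1 k :=
  PConst (VMsg (m0 l)) (PSign 2 (PPair 2 3 (PSPO 5 3 (PFst 6 (POut 7 3 4)) (POut 2 3 4)))).

Lemma match_eq (R : realType) l k1 k (h : hfun l k1 k) (N e d : nat) (m : bits l) (r : bits k1)
  (ok : forall y, ((y ^ d %% N) ^ e %% N = y %% N)%N) :
  match
    [seq m' <- enum {: bits l} | ((m', r) != (m, r)) && (h (m', r) == h (m, r))]
  with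
  | [::] =>
      if (m \notin [:: m]) && pfdh_verify h N e m r (pfdh_sigval h N d m r)
      then (1 : R) else 0
  | _ :: _ =>
      (\sum_(m' <- [seq m' <- enum {: bits l} | ((m', r) != (m, r)) && (h (m', r) == h (m, r))])
         (if (m' \notin [:: m]) && pfdh_verify h N e m' r (pfdh_sigval h N d m r)
          then 1 else 0)) /
      (size [seq m' <- enum {: bits l} | ((m', r) != (m, r)) && (h (m', r) == h (m, r))])%:R
  end = 1 - ([forall a, (a != m) ==> (h (a, r) != h (m, r))])%:R.
Proof.
set s := [seq m' <- _ | _].
have Hs : (s == [::]) = [forall a, (a != m) ==> (h (a, r) != h (m, r))].
  apply/idP/forallP => [/eqP H a | H].
    apply/implyP => na; apply/negP => ha.
    have : a \in s by rewrite mem_filter mem_enum xpair_eqE eqxx andbT ha na.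
    by rewrite H.
  rewrite -(negbK (s == [::])) -has_filter; apply/negP => /hasP[a _].
  rewrite xpair_eqE eqxx andbT => /andP[na ha].
  by have := H a; rewrite na (eqP ha) eqxx.
rewrite -Hs; case E: s => [|x s'] /=.
  by rewrite inE eqxx /= subrr.
rewrite -E big_seq_cond (eq_bigr (fun _ => 1)); last first.
  move=> a /andP[]; rewrite mem_filter xpair_eqE eqxx andbT => /andP[/andP[na ha] _] _.
  by rewrite inE na /= /pfdh_verify /pfdh_sigval (eqP ha) ok eqxx.
rewrite -big_seq_cond (_ : \sum_(i <- s) (1:R) = (size s)%:R); last first.
  by rewrite -sum1_size natr_sum.
by rewrite E /= subr0 mulfV // pnatr_eq0.
Qed.

Lemma forge_eq (R : realType) l k1 k p q e d : (0 < l)%N ->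
  rsa_key k p q e d ->
  forge_prob R (Aprog l k1 k) p q e d =
  1 - (1 - (#|{: bits k}|%:R)^-1) ^+ #|{: bits l}|.-1.
Proof.
move=> hl key.
have ok := fun y => rsa_ok k p q e d y key.
have Qpos : (0 < #|{: bits k}|)%N by rewrite card_tuple card_bool expn_gt0.
rewrite /forge_prob /= /avg.
under eq_bigr => h _ do under eq_bigr => r _ do rewrite (@match_eq R l k1 k h _ _ _ _ r ok).
rewrite -mulr_suml exchange_big /=.
set c := (1 - _) ^+ _.
set NH := #|{: hfun l k1 k}|%:R.
have NH0 : NH != 0 by rewrite pnatr_eq0 -lt0n card_ffun expn_gt0 Qpos.
rewrite (eq_bigr (fun r => NH * (1 - c))); last first.
  move=> r _; rewrite sumrB.
  have := nocoll_sum R _ _ _ (m0 l, r) Qpos; rewrite /= => ->.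
  rewrite sumr_const mulrBr mulr1 /NH card_ffun natrX; congr (_ - _).
set C := NH * (1 - c).
rewrite sumr_const; transitivity (C / NH).
  congr (_ / _).
  rewrite (_ : #|_| = #|{: bits k1}|); last by apply: eq_card.
  rewrite -[C *+ _]mulr_natr; apply: mulfK.
  by rewrite pnatr_eq0 -lt0n card_tuple card_bool expn_gt0.
by rewrite /C mulrAC mulfV // mul1r.
Qed.

Theorem theorem3 :
  exists (A : forall l k1 k : nat, prog l k1 k) (c : nat),
    (forall l k1 k : nat, (psize (A l k1 k) <= c)%N) /\
    forall (R : realType) (l k1 k p q e d : nat),
      (0 < l)%N -> (0 < k1)%N -> (0 < k)%N ->
      rsa_key k p q e d ->
      1 - expR ((1 - 2 ^+ l) / 2 ^+ k) <= forge_prob R (A l k1 k) p q e d /\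
      ((k <= l)%N -> (2 <= k)%N ->
         1 - expR (- (1 / 2)) <= forge_prob R (A l k1 k) p q e d).
Proof.
exists Aprog, 7%N; split; first by [].
move=> R l k1 k p q e d hl hk1 hk key.
rewrite forge_eq // !card_tuple !card_bool natrX.
set x : R := (2 ^+ k)^-1.
have Q1 : (1 : R) <= 2 ^+ k by rewrite exprn_ege1 // ler1n.
have x0 : 0 <= x by rewrite invr_ge0 (le_trans ler01 Q1).
have x1 : x <= 1 by rewrite invf_le1 // (lt_le_trans ltr01 Q1).
have c0 : 0 <= 1 - x by rewrite subr_ge0.
have c1 : 1 - x <= expR (- x) by have := expR_ge1Dx (- x).
have L1 : (1 <= 2 ^ l)%N by rewrite expn_gt0.
have Hn : ((2 ^ l).-1%:R : R) = 2 ^+ l - 1 by rewrite -subn1 natrB // natrX.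
have E : (1 - 2 ^+ l) / 2 ^+ k = ((2 ^ l).-1)%:R * (- x) :> R.
  by rewrite Hn /x mulrN -mulNr opprB.
have main : 1 - expR ((1 - 2 ^+ l) / 2 ^+ k) <= 1 - (1 - x) ^+ (2 ^ l).-1.
  rewrite lerD2l lerN2 E expRM_natl; apply: lerXn2r => //.
  by rewrite nnegrE expR_ge0.
split => // hkl hk2; apply: le_trans main; rewrite lerD2l lerN2 ler_expR.
have Ek : (2 : R) ^+ k = 2 * 2 ^+ k.-1 by rewrite -exprS prednK // (ltn_trans _ hk2).
have t2 : (2 : R) <= 2 ^+ k.-1.
  by rewrite -[X in X <= _]expr1 ler_eXn2l // ?ltr1n // -ltnS prednK // (ltn_trans _ hk2).
have Lk : (2 : R) ^+ k <= 2 ^+ l by rewrite ler_eXn2l // ltr1n.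
rewrite ler_pdivrMr; last by rewrite exprn_gt0.
rewrite Ek in Lk *; lra.
Qed.
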